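(* Let $t,t'\in B_n$ with $t\neq t'$, let $G$ be a digraph such that $\mathbb{A}(G)$ satisfies $t\approx t'$, and let $L=L_{t,t'}$. If $v_0\to v_1\to\dots\to v_{L+1}$ is a walk and $(v_L,v'_{L+1})$ is an edge in $G$ such that $v_{L+1}$ and $v'_{L+1}$ belong to nontrivial strongly connected components $K$ and $K'$ respectively, then $K=K'$. Consequently, $B_G<L_{t,t'}$.
   Context: Digraphs $G=(V,E)$ have $E\subseteq V\times V$, loops allowed, possibly infinite. $\mathbb{A}(G)$ is the groupoid on $V\cup\{\infty\}$ with $xy=x$ if $x,y\in V$, $(x,y)\in E$, and $xy=\infty$ otherwise. $B_n$: binary terms with $x_1,\dots,x_n$ each occurring once in this order; $G(t)$: rooted tree defined by $G(x_i)$ a single vertex and $G(t_1t_2)=G(t_1)\cup G(t_2)$ plus an edge from the leftmost variable of $t_1$ to that of $t_2$; root $x_1$. With $T=G(t)$, $T'=G(t')$ and depth $d_T$: $L_{t,t'}$ is the largest integer $m$ such that for all $x$, if $d_T(x)\le m$ or $d_{T'}(x)\le m$ then $d_T(x)=d_{T'}(x)$. A strongly connected component is trivial if it is a single vertex without a loop, nontrivial otherwise. $B_G$ is the largest integer $m$ such that there exist a walk $v_0\to\dots\to v_m$ and edges $(v_m,v_{m+1}),(v_m,v'_{m+1})$ with $v_{m+1},v'_{m+1}$ in distinct nontrivial strongly connected components ($\infty$ if unbounded, $-\infty$ if none). *)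

(* Defs.v *)
From Stdlib Require Import List Arith ClassicalEpsilon.
Import ListNotations.
Set Implicit Arguments.

(* Variable x_i is [Var i]; B_n uses x_1,...,x_n. *)
Inductive term : Type :=
| Var : nat -> term
| App : term -> term -> term.

Fixpoint leaves (t : term) : list nat :=
  match t with
  | Var i => [i]
  | App a b => leaves a ++ leaves b
  end.

Definition in_Bn (n : nat) (t : term) : Prop := leaves t = seq 1 n.

Fixpoint leftmost (t : term) : nat :=
  match t with
  | Var i => i
  | App a _ => leftmost a
  end.

Fixpoint tedges (t : term) : list (nat * nat) :=
  match t with
  | Var _ => []
  | App a b => (leftmost a, leftmost b) :: tedges a ++ tedges b
  end.

Inductive twalk (t : term) : nat -> nat -> nat -> Prop :=
| twalk_nil x : twalk t x x 0
| twalk_cons x y z k : In (x, y) (tedges t) -> twalk t y z k -> twalk t x z (S k).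

Definition is_depth (t : term) (x d : nat) : Prop :=
  twalk t (leftmost t) x d /\ forall d', twalk t (leftmost t) x d' -> d <= d'.

Definition L_cond (t t' : term) (m : nat) : Prop :=
  forall x dT dT', is_depth t x dT -> is_depth t' x dT' ->
    (dT <= m \/ dT' <= m) -> dT = dT'.

(* L is L_{t,t'}: the largest integer satisfying L_cond.  (Negative integers
   satisfy it vacuously and 0 always does, so L is a natural number.) *)
Definition is_L (t t' : term) (L : nat) : Prop :=
  L_cond t t' L /\ forall m, L_cond t t' m -> m <= L.

(* A digraph is a vertex type V with edge relation E (loops allowed, possibly infinite).
   The carrier of A(G) is option V, with None playing the role of ∞. *)
Definition Aop (V : Type) (E : V -> V -> Prop) (a b : option V) : option V :=
  match a, b with
  | Some x, Some y =>
      if excluded_middle_informative (E x y) then Some x else None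
  | _, _ => None
  end.

Fixpoint eval (V : Type) (E : V -> V -> Prop) (s : nat -> option V) (t : term)
  : option V :=
  match t with
  | Var i => s i
  | App a b => Aop E (eval E s a) (eval E s b)
  end.

Definition satisfies (V : Type) (E : V -> V -> Prop) (t t' : term) : Prop :=
  forall s : nat -> option V, eval E s t = eval E s t'.

Inductive reach (V : Type) (E : V -> V -> Prop) : V -> V -> Prop :=
| reach_refl x : reach E x x
| reach_step x y z : E x y -> reach E y z -> reach E x z.

Definition scc (V : Type) (E : V -> V -> Prop) (v : V) : V -> Prop :=
  fun w => reach E v w /\ reach E w v.

Definition nontrivial_scc (V : Type) (E : V -> V -> Prop) (v : V) : Prop :=
  (exists w, w <> v /\ scc E v w) \/ E v v.

(* m belongs to the set whose supremum is B_G: there is a walk v_0 -> ... -> v_m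
   and edges (v_m, a), (v_m, b) with a, b in distinct nontrivial SCCs. *)
Definition BG_witness (V : Type) (E : V -> V -> Prop) (m : nat) : Prop :=
  exists (v : nat -> V) (a b : V),
    (forall i, i < m -> E (v i) (v (S i))) /\
    E (v m) a /\ E (v m) b /\
    nontrivial_scc E a /\ nontrivial_scc E b /\ scc E a <> scc E b.

(* B_G < L  (B_G in Z ∪ {±∞}): every admissible m is < L. *)
Definition BG_lt (V : Type) (E : V -> V -> Prop) (L : nat) : Prop :=
  forall m, BG_witness E m -> m < L.

(* Main.v *)
Require Import Defs.
From Stdlib Require Import List Arith Lia Sorted Classical ClassicalEpsilon FunctionalExtensionality PropExtensionality.
Import ListNotations.

Fixpoint dep (t : term) (x : nat) : nat :=
  match t with
  | Var _ => 0
  | App a b => if in_dec Nat.eq_dec x (leaves a) then dep a x else S (dep b x)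
  end.

Definition good (t : term) : Prop := StronglySorted lt (leaves t).

Lemma SS_app (A : Type) (R : A -> A -> Prop) l1 l2 :
  StronglySorted R (l1 ++ l2) ->
  StronglySorted R l1 /\ StronglySorted R l2 /\ (forall x y, In x l1 -> In y l2 -> R x y).
Proof.
  induction l1 as [|a l1 IH]; simpl; intros H.
  - split; [constructor|split; [exact H| intros x y []]].
  - apply StronglySorted_inv in H as [H1 H2].
    destruct (IH H1) as [A1 [A2 A3]].
    apply Forall_app in H2 as [F1 F2].
    split; [constructor; assumption|split; [assumption|]].
    intros x y [<-|Hx] Hy.
    + rewrite Forall_forall in F2; auto.
    + auto.
Qed.

Lemma good_App a b : good (App a b) ->
  good a /\ good b /\ (forall x y, In x (leaves a) -> In y (leaves b) -> x < y).
Proof. unfold good; simpl; apply SS_app. Qed.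

Lemma seq_sorted s k : StronglySorted lt (seq s k).
Proof.
  revert s; induction k; intros s; simpl; constructor; auto.
  apply Forall_forall; intros x Hx; apply in_seq in Hx; lia.
Qed.

Lemma lm_in t : In (leftmost t) (leaves t).
Proof. induction t; simpl; auto. apply in_or_app; auto. Qed.

Lemma edges_in t i j : In (i, j) (tedges t) -> In i (leaves t) /\ In j (leaves t).
Proof.
  induction t; simpl; [intros []|].
  intros [H|H].
  - injection H; intros; subst; split; apply in_or_app; [left|right]; apply lm_in.
  - apply in_app_or in H as [H|H]; [destruct (IHt1 H)|destruct (IHt2 H)];
      split; apply in_or_app; auto.
Qed.

Lemma lm_min t x : good t -> In x (leaves t) -> leftmost t <= x.
Proof.
  induction t; simpl; intros G H.
  - destruct H as [->|[]]; lia.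
  - destruct (good_App _ _ G) as [G1 [G2 G3]].
    apply in_app_or in H as [H|H]; auto.
    specialize (G3 _ _ (lm_in t1) H); lia.
Qed.

Lemma edge_lt t i j : good t -> In (i, j) (tedges t) -> i < j.
Proof.
  induction t; simpl; [intros _ []|].
  intros G H; destruct (good_App _ _ G) as [G1 [G2 G3]].
  destruct H as [H|H].
  - injection H; intros; subst; apply G3; apply lm_in.
  - apply in_app_or in H as [H|H]; auto.
Qed.

Lemma dep_lm t : dep t (leftmost t) = 0.
Proof.
  induction t; simpl; auto.
  destruct (in_dec Nat.eq_dec (leftmost t1) (leaves t1)); auto.
  exfalso; apply n; apply lm_in.
Qed.

Lemma edge_dep t i j : good t -> In (i, j) (tedges t) -> dep t j = S (dep t i).
Proof.
  induction t; simpl; [intros _ []|].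
  intros G H; destruct (good_App _ _ G) as [G1 [G2 G3]].
  destruct H as [H|H].
  - injection H; intros; subst.
    destruct (in_dec Nat.eq_dec (leftmost t2) (leaves t1)) as [h|h].
    + specialize (G3 _ _ h (lm_in t2)); lia.
    + destruct (in_dec Nat.eq_dec (leftmost t1) (leaves t1)) as [h'|h'].
      * rewrite !dep_lm; reflexivity.
      * exfalso; apply h'; apply lm_in.
  - apply in_app_or in H as [H|H].
    + destruct (edges_in _ _ _ H) as [Hi Hj].
      destruct (in_dec Nat.eq_dec j (leaves t1)); [|contradiction].
      destruct (in_dec Nat.eq_dec i (leaves t1)); [|contradiction]. auto.
    + destruct (edges_in _ _ _ H) as [Hi Hj].
      destruct (in_dec Nat.eq_dec j (leaves t1)) as [h|h].
      { specialize (G3 _ _ h Hj); lia. }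
      destruct (in_dec Nat.eq_dec i (leaves t1)) as [h'|h'].
      { specialize (G3 _ _ h' Hi); lia. }
      rewrite (IHt2 G2 H); reflexivity.
Qed.

Lemma uniq_parent t i i' j : good t -> In (i, j) (tedges t) -> In (i', j) (tedges t) -> i = i'.
Proof.
  induction t; simpl; [intros _ []|].
  intros G H H'; destruct (good_App _ _ G) as [G1 [G2 G3]].
  assert (Nb : forall k, In (k, leftmost t2) (tedges t2) -> False).
  { intros k Hk. pose proof (edge_lt _ _ _ G2 Hk).
    pose proof (lm_min _ k G2 (proj1 (edges_in _ _ _ Hk))); lia. }
  assert (Na : forall k, In (k, leftmost t2) (tedges t1) -> False).
  { intros k Hk. pose proof (G3 _ _ (proj2 (edges_in _ _ _ Hk)) (lm_in t2)); lia. }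
  destruct H as [H|H]; destruct H' as [H'|H'].
  - congruence.
  - injection H; intros; subst. apply in_app_or in H' as [H'|H']; exfalso; eauto.
  - injection H'; intros; subst. apply in_app_or in H as [H|H]; exfalso; eauto.
  - apply in_app_or in H as [H|H]; apply in_app_or in H' as [H'|H']; eauto.
    + pose proof (G3 _ _ (proj2 (edges_in _ _ _ H)) (proj2 (edges_in _ _ _ H'))); lia.
    + pose proof (G3 _ _ (proj2 (edges_in _ _ _ H')) (proj2 (edges_in _ _ _ H))); lia.
Qed.

Lemma twalk_dep t y z k : good t -> twalk t y z k -> dep t z = dep t y + k.
Proof.
  intros G H; induction H; [lia|].
  rewrite IHtwalk, (edge_dep _ _ _ G H); lia.
Qed.

Lemma twalk_le t y z k : good t -> twalk t y z k -> y <= z /\ (0 < k -> y < z).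
Proof.
  intros G H; induction H; [lia|].
  pose proof (edge_lt _ _ _ G H); lia.
Qed.

Lemma twalk_in t y z k : twalk t y z k -> In y (leaves t) -> In z (leaves t).
Proof.
  intros H; induction H; auto. intros _; apply IHtwalk; apply (edges_in _ _ _ H).
Qed.

Lemma twalk_snoc t x y z k : twalk t x y k -> In (y, z) (tedges t) -> twalk t x z (S k).
Proof.
  intros H; induction H; intros.
  - econstructor; [eassumption|constructor].
  - econstructor; eauto.
Qed.

Lemma twalk_unsnoc t k : forall x z, twalk t x z (S k) ->
  exists y, twalk t x y k /\ In (y, z) (tedges t).
Proof.
  induction k; intros x z H; inversion H; subst.
  - inversion H4; subst. exists x; split; [constructor|assumption].
  - destruct (IHk _ _ H4) as [y' [W1 W2]]. exists y'; split; [econstructor; eauto|auto].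
Qed.

Lemma twalk_split t k1 : forall k2 a c, twalk t a c (k1 + k2) ->
  exists b, twalk t a b k1 /\ twalk t b c k2.
Proof.
  induction k1; simpl; intros k2 a c H.
  - exists a; split; [constructor|assumption].
  - inversion H; subst. destruct (IHk1 _ _ _ H4) as [b [W1 W2]].
    exists b; split; [econstructor; eauto|auto].
Qed.

Lemma twalk_lift a t y z k : (forall e, In e (tedges a) -> In e (tedges t)) ->
  twalk a y z k -> twalk t y z k.
Proof. intros Hs H; induction H; econstructor; eauto. Qed.

Lemma dep_twalk t x : In x (leaves t) -> twalk t (leftmost t) x (dep t x).
Proof.
  induction t; simpl; intros H.
  - destruct H as [->|[]]; constructor.
  - destruct (in_dec Nat.eq_dec x (leaves t1)) as [h|h].
    + eapply twalk_lift; [|apply IHt1; exact h].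
      intros e He; simpl; right; apply in_or_app; auto.
    + apply in_app_or in H as [H|H]; [contradiction|].
      econstructor; [left; reflexivity|].
      eapply twalk_lift; [|apply IHt2; exact H].
      intros e He; simpl; right; apply in_or_app; auto.
Qed.

Lemma leaves_hd t : exists r, leaves t = leftmost t :: r.
Proof.
  induction t; simpl; [eexists; reflexivity|].
  destruct IHt1 as [r ->]; eexists; reflexivity.
Qed.

Lemma cross_walk (P : nat -> Prop) t y z k : twalk t y z k -> ~ P y -> P z ->
  exists p c k', twalk t y p k' /\ In (p, c) (tedges t) /\ ~ P p /\ P c.
Proof.
  intros H; induction H; intros Hy Hz; [contradiction|].
  destruct (classic (P y)) as [h|h].
  - exists x, y, 0; repeat split; auto; constructor.
  - destruct (IHtwalk h Hz) as [p [c [k' [W [E1 [E2 E3]]]]]].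
    exists p, c, (S k'); repeat split; auto. econstructor; eauto.
Qed.

Lemma eval_none_or V (E : V -> V -> Prop) s t : eval E s t = None \/ eval E s t = s (leftmost t).
Proof.
  induction t; simpl; auto.
  destruct IHt1 as [-> | ->]; [left; reflexivity|].
  destruct IHt2 as [-> | ->]; [destruct (s (leftmost t1)); left; reflexivity|].
  destruct (s (leftmost t1)); [|left; reflexivity].
  destruct (s (leftmost t2)); [|left; reflexivity].
  simpl; destruct (excluded_middle_informative (E v v0)); auto.
Qed.

Lemma eval_ok V (E : V -> V -> Prop) (f : nat -> V) t :
  (forall i j, In (i, j) (tedges t) -> E (f i) (f j)) ->
  eval E (fun u => Some (f u)) t = Some (f (leftmost t)).
Proof.
  induction t; simpl; intros H; [reflexivity|].
  rewrite IHt1, IHt2.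
  - simpl; destruct (excluded_middle_informative (E (f (leftmost t1)) (f (leftmost t2)))) as [h|h];
      [reflexivity|exfalso; apply h; apply H; left; reflexivity].
  - intros; apply H; right; apply in_or_app; auto.
  - intros; apply H; right; apply in_or_app; auto.
Qed.

Lemma eval_bad V (E : V -> V -> Prop) (f : nat -> V) t i j :
  In (i, j) (tedges t) -> ~ E (f i) (f j) -> eval E (fun u => Some (f u)) t = None.
Proof.
  induction t; simpl; intros Hin Hne; [destruct Hin|].
  destruct Hin as [Heq|Hin].
  - injection Heq; intros; subst.
    destruct (eval_none_or V E (fun u => Some (f u)) t1) as [-> | ->]; [reflexivity|].
    destruct (eval_none_or V E (fun u => Some (f u)) t2) as [-> | ->]; [reflexivity|].
    simpl; destruct (excluded_middle_informative (E (f (leftmost t1)) (f (leftmost t2))));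
      [contradiction|reflexivity].
  - apply in_app_or in Hin as [Hin|Hin].
    + rewrite IHt1 by assumption; reflexivity.
    + rewrite IHt2 by assumption; destruct (eval E _ t1); reflexivity.
Qed.

Lemma reach_trans V (E : V -> V -> Prop) x y z : reach E x y -> reach E y z -> reach E x z.
Proof. intros H; induction H; auto. intros; econstructor; eauto. Qed.

Lemma reach1 V (E : V -> V -> Prop) x y : E x y -> reach E x y.
Proof. intros; econstructor; eauto; constructor. Qed.

Lemma walk_reach V (E : V -> V -> Prop) (w : nat -> V) :
  (forall k, E (w k) (w (S k))) -> forall k, reach E (w 0) (w k).
Proof.
  intros H k; induction k; [constructor|].
  eapply reach_trans; [eassumption|apply reach1; auto].
Qed.

Lemma reach_first V (E : V -> V -> Prop) c d : reach E c d -> c <> d ->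
  exists y, E c y /\ reach E y d.
Proof. intros H; destruct H; [intros h; congruence|eauto]. Qed.

Lemma scc_step V (E : V -> V -> Prop) u c : nontrivial_scc E u -> scc E u c ->
  exists y, E c y /\ scc E u y.
Proof.
  intros Hnt [H1 H2].
  destruct (classic (c = u)) as [->|h].
  - destruct Hnt as [[w [Hw [W1 W2]]]|Hl].
    + destruct (reach_first _ _ _ _ W1 (fun e => Hw (eq_sym e))) as [y [Ey Ry]].
      exists y; split; auto; split; [apply reach1; auto|eapply reach_trans; eauto].
    + exists u; split; auto; split; constructor.
  - destruct (reach_first _ _ _ _ H2 h) as [y [Ey Ry]].
    exists y; split; auto; split; auto.
    eapply reach_trans; [eassumption|apply reach1; auto].
Qed.

Lemma inf_walk V (E : V -> V -> Prop) (P : V -> Prop) u : P u ->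
  (forall c, P c -> exists y, E c y /\ P y) ->
  exists w : nat -> V, w 0 = u /\ forall k, E (w k) (w (S k)) /\ P (w k).
Proof.
  intros Hu Hs.
  pose (g := fun c : {c | P c} =>
    let H := constructive_indefinite_description _ (Hs _ (proj2_sig c)) in
    exist P (proj1_sig H) (proj2 (proj2_sig H))).
  assert (Hg : forall c, E (proj1_sig c) (proj1_sig (g c))).
  { intros c; unfold g; simpl.
    destruct (constructive_indefinite_description _ _) as [y [Ey Py]]; simpl; auto. }
  exists (fun k => proj1_sig (Nat.iter k g (exist P u Hu))).
  split; [reflexivity|]. intros k; split.
  - simpl; apply Hg.
  - apply proj2_sig.
Qed.

Definition ext {V : Type} (v w : nat -> V) (L k : nat) : V := if k <=? L then v k else w (k - S L).

Lemma ext_low V v w L k : k <= L -> ext (V:=V) v w L k = v k.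
Proof. unfold ext; intros; destruct (Nat.leb_spec k L); [reflexivity|lia]. Qed.
Lemma ext_high V v w L k : S L <= k -> ext (V:=V) v w L k = w (k - S L).
Proof. unfold ext; intros; destruct (Nat.leb_spec k L); [lia|reflexivity]. Qed.

Lemma ext_walk V (E : V -> V -> Prop) v w L :
  (forall i, i < L -> E (v i) (v (S i))) -> E (v L) (w 0) ->
  (forall k, E (w k) (w (S k))) -> forall k, E (ext v w L k) (ext v w L (S k)).
Proof.
  intros Hv H0 Hw k.
  destruct (Nat.lt_ge_cases k L).
  - rewrite !ext_low by lia; auto.
  - destruct (Nat.eq_dec k L) as [->|h].
    + rewrite ext_low, ext_high by lia. replace (S L - S L) with 0 by lia; auto.
    + rewrite !ext_high by lia. replace (S k - S L) with (S (k - S L)) by lia; auto.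
Qed.

Lemma core (V : Type) (E : V -> V -> Prop) (t t' : term) (L : nat) (v wa wb : nat -> V)
  (ua ub : V) (x : nat) :
  good t -> good t' -> leftmost t = leftmost t' ->
  (forall p, In p (leaves t') -> dep t p <= L -> dep t' p = dep t p) ->
  (forall i, i < L -> E (v i) (v (S i))) -> E (v L) ua -> E (v L) ub ->
  wa 0 = ua -> (forall k, E (wa k) (wa (S k))) -> (forall k, reach E (wa k) ua) ->
  wb 0 = ub -> (forall k, E (wb k) (wb (S k))) -> ~ reach E ub ua ->
  In x (leaves t') -> dep t x = S L -> S (S L) <= dep t' x ->
  satisfies E t t' -> False.
Proof.
  intros G G' Hlm Lc Hv Ha Hb Hwa0 Hwa Rwa Hwb0 Hwb Hnr Hx Hdx Hdx' Hsat.
  set (Sx := fun u => exists k, twalk t x u k).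
  set (f := fun u => if excluded_middle_informative (Sx u) then ext v wa L (dep t u)
                     else ext v wb L (dep t u)).
  assert (Wa := ext_walk V E v wa L Hv (eq_ind_r _ Ha Hwa0) Hwa).
  assert (Wb := ext_walk V E v wb L Hv (eq_ind_r _ Hb Hwb0) Hwb).
  assert (Hom : forall i j, In (i, j) (tedges t) -> E (f i) (f j)).
  { intros i j Hij. pose proof (edge_dep _ _ _ G Hij) as Hd. unfold f.
    destruct (excluded_middle_informative (Sx i)) as [Si|Si];
      destruct (excluded_middle_informative (Sx j)) as [Sj|Sj]; rewrite Hd.
    - apply Wa.
    - exfalso; apply Sj. destruct Si as [k Hk]. exists (S k); eapply twalk_snoc; eauto.
    - destruct Sj as [k Hk]. destruct k.
      + inversion Hk; subst. rewrite Hdx in Hd. injection Hd; intros Hdi.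
        rewrite <- Hdi, ext_low, ext_high by lia. replace (S L - S L) with 0 by lia.
        try rewrite Hwa0; auto.
      + destruct (twalk_unsnoc _ _ _ _ Hk) as [i' [W1 W2]].
        rewrite (uniq_parent _ _ _ _ G W2 Hij) in W1. exfalso; apply Si; eexists; eauto.
    - apply Wb. }
  pose proof (eval_ok V E f t Hom) as Ht.
  assert (Hw := dep_twalk _ _ Hx).
  replace (dep t' x) with (S L + (dep t' x - S L)) in Hw by lia.
  destruct (twalk_split _ _ _ _ _ Hw) as [y [W1 W2]].
  assert (Hdy : dep t' y = S L).
  { rewrite (twalk_dep _ _ _ _ G' W1), dep_lm; lia. }
  assert (Ny : ~ Sx y).
  { intros [k Hk]. pose proof (twalk_le _ _ _ _ G Hk).
    pose proof (twalk_le _ _ _ _ G' W2). lia. }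
  assert (Sxx : Sx x) by (exists 0; constructor).
  destruct (cross_walk Sx _ _ _ _ W2 Ny Sxx) as [p [c [k' [Wp [Epc [Np Sc]]]]]].
  assert (Hdp' : dep t' p = S L + k') by (rewrite (twalk_dep _ _ _ _ G' Wp); lia).
  assert (Hdp : S L <= dep t p).
  { destruct (Nat.le_gt_cases (dep t p) L) as [h|h]; [|lia].
    pose proof (Lc p (proj1 (edges_in _ _ _ Epc)) h); lia. }
  destruct Sc as [k4 Hc].
  assert (Hdc : dep t c = S L + k4) by (rewrite (twalk_dep _ _ _ _ G Hc); lia).
  assert (Nf : ~ E (f p) (f c)).
  { unfold f.
    destruct (excluded_middle_informative (Sx p)) as [h|h]; [contradiction|].
    destruct (excluded_middle_informative (Sx c)) as [h'|h']; [|exfalso; apply h'; eexists; eauto].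
    rewrite !ext_high by lia. intros He. apply Hnr.
    eapply reach_trans; [|eapply reach_trans; [apply reach1; exact He|apply Rwa]].
    rewrite <- Hwb0; apply walk_reach; auto. }
  pose proof (eval_bad V E f t' _ _ Epc Nf) as Ht'.
  specialize (Hsat (fun u => Some (f u))). congruence.
Qed.

Lemma isd_dep t x d : good t -> is_depth t x d -> d = dep t x.
Proof. intros G [W _]. rewrite (twalk_dep _ _ _ _ G W), dep_lm; lia. Qed.

Lemma isd_in t x d : is_depth t x d -> In x (leaves t).
Proof. intros [W _]. eapply twalk_in; [exact W|apply lm_in]. Qed.

Lemma dep_isd t x : good t -> In x (leaves t) -> is_depth t x (dep t x).
Proof.
  intros G H; split; [apply dep_twalk; auto|].
  intros d' W; rewrite (twalk_dep _ _ _ _ G W), dep_lm; lia.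
Qed.

Lemma scc_eq V (E : V -> V -> Prop) a b : reach E a b -> reach E b a -> scc E a = scc E b.
Proof.
  intros H1 H2; apply functional_extensionality; intros w; apply propositional_extensionality.
  unfold scc; split; intros [A B]; split; eapply reach_trans; eauto.
Qed.

Lemma final (V : Type) (E : V -> V -> Prop) (t t' : term) (L : nat) (v : nat -> V)
  (ua ub : V) (x : nat) :
  good t -> good t' -> leftmost t = leftmost t' ->
  (forall p, In p (leaves t') -> dep t p <= L -> dep t' p = dep t p) ->
  (forall i, i < L -> E (v i) (v (S i))) -> E (v L) ua -> E (v L) ub ->
  nontrivial_scc E ua -> nontrivial_scc E ub -> ~ reach E ub ua ->
  In x (leaves t') -> dep t x = S L -> S (S L) <= dep t' x ->
  satisfies E t t' -> False.
Proof.
  intros G G' Hlm Lc Hv Ha Hb Na Nb Hnr Hx Hdx Hdx' Hsat.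
  destruct (inf_walk V E (scc E ua) ua (conj (reach_refl E ua) (reach_refl E ua))
              (fun c => scc_step V E ua c Na)) as [wa [Wa0 Wa]].
  destruct (inf_walk V E (scc E ub) ub (conj (reach_refl E ub) (reach_refl E ub))
              (fun c => scc_step V E ub c Nb)) as [wb [Wb0 Wb]].
  eapply (core V E t t' L v wa wb ua ub x); eauto.
  - intros k; apply (Wa k).
  - intros k; apply (proj2 (proj2 (Wa k))).
  - intros k; apply (Wb k).
Qed.

Theorem lemma6p19 (n : nat) (t t' : term) (V : Type) (E : V -> V -> Prop) (L : nat) :
  in_Bn n t -> in_Bn n t' -> t <> t' ->
  satisfies E t t' ->
  is_L t t' L ->
  (forall (v : nat -> V) (v' : V),
      (forall i, i <= L -> E (v i) (v (S i))) ->
      E (v L) v' ->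
      nontrivial_scc E (v (S L)) ->
      nontrivial_scc E v' ->
      scc E (v (S L)) = scc E v')
  /\ BG_lt E L.
Proof.
  intros Hn Hn' _ Hsat [HLc HLmax].
  assert (G : good t) by (unfold good; rewrite Hn; apply seq_sorted).
  assert (G' : good t') by (unfold good; rewrite Hn'; apply seq_sorted).
  assert (Hl : leaves t = leaves t') by congruence.
  assert (Hlm : leftmost t = leftmost t').
  { destruct (leaves_hd t) as [r Hr]; destruct (leaves_hd t') as [r' Hr'].
    congruence. }
  assert (Lc : forall p, In p (leaves t) -> (dep t p <= L \/ dep t' p <= L) -> dep t p = dep t' p).
  { intros p Hp H. apply (HLc p); auto; apply dep_isd; congruence. }
  assert (Hx : exists x, In x (leaves t) /\ (dep t x <= S L \/ dep t' x <= S L) /\ dep t x <> dep t' x).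
  { apply NNPP; intros Hno.
    assert (HC : L_cond t t' (S L)).
    { intros x dT dT' H1 H2 H3.
      rewrite (isd_dep _ _ _ G H1) in *; rewrite (isd_dep _ _ _ G' H2) in *.
      apply NNPP; intros Hne; apply Hno; exists x; split; auto. eapply isd_in; eauto. }
    apply HLmax in HC; lia. }
  destruct Hx as [x [Hx [Hxm Hxne]]].
  assert (Hxm2 : ~ (dep t x <= L \/ dep t' x <= L)) by (intros h; apply Hxne; auto).
  assert (Hsat' : satisfies E t' t) by (intros s; symmetry; apply Hsat).
  assert (P1 : forall (v : nat -> V) (v' : V),
      (forall i, i <= L -> E (v i) (v (S i))) ->
      E (v L) v' ->
      nontrivial_scc E (v (S L)) ->
      nontrivial_scc E v' ->
      scc E (v (S L)) = scc E v').
  { intros v v' Hv Hv' Na Nb. apply NNPP; intros Hne.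
    assert (Hv2 : forall i, i < L -> E (v i) (v (S i))) by (intros; apply Hv; lia).
    assert (HvL : E (v L) (v (S L))) by (apply Hv; lia).
    assert (K : forall ua ub, E (v L) ua -> E (v L) ub -> nontrivial_scc E ua ->
                 nontrivial_scc E ub -> ~ reach E ub ua -> False).
    { intros ua ub Ha Hb Nua Nub Hr.
      destruct (Nat.le_gt_cases (dep t x) (S L)) as [h|h].
      - eapply (final V E t t' L v ua ub x); eauto.
        + intros p Hp hp; symmetry; apply Lc; auto; congruence.
        + congruence.
        + lia.
        + lia.
      - eapply (final V E t' t L v ua ub x); eauto.
        all: first [ lia | (intros p Hp hp; apply Lc; auto; rewrite Hl; auto) | idtac ].
        all: fail. }
    destruct (classic (reach E v' (v (S L)))) as [h1|h1].
    - destruct (classic (reach E (v (S L)) v')) as [h2|h2].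
      + apply Hne; apply scc_eq; auto.
      + apply (K v' (v (S L))); auto.
    - apply (K (v (S L)) v'); auto. }
  split; [exact P1|].
  intros m [w [a [b [Hw [Ha [Hb [Na [Nb Hab]]]]]]]].
  destruct (Nat.lt_ge_cases m L) as [h|h]; auto. exfalso.
  set (v2 := fun i => if i <=? L then w (i + (m - L)) else a).
  apply Hab.
  assert (E1 : v2 (S L) = a) by (unfold v2; destruct (Nat.leb_spec (S L) L); [lia|reflexivity]).
  assert (E2 : v2 L = w m) by (unfold v2; destruct (Nat.leb_spec L L); [f_equal; lia|lia]).
  rewrite <- E1. apply P1.
  - intros i hi. destruct (Nat.eq_dec i L) as [->|hne].
    + rewrite E2, E1; auto.
    + unfold v2. destruct (Nat.leb_spec i L); [|lia]. destruct (Nat.leb_spec (S i) L); [|lia].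
      replace (S i + (m - L)) with (S (i + (m - L))) by lia. apply Hw; lia.
  - rewrite E2; auto.
  - rewrite E1; auto.
  - auto.
Qed.
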